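(* Let $\Omega$ be a commutative adic $\mathbb{Z}_\ell$-algebra, $\mathbb{F}$ a finite field, $k$ an integer prime to $\ell$, and $\gamma$ the image of the geometric Frobenius $\mathrm{Frob}_{\mathbb{F}}$ in $\Gamma_{k\ell^\infty}$. Let $P=\{f(T)\in\Omega[T]:f(0)\in\Omega^\times\}$ and $S=\{f\in\Omega[[\Gamma_{k\ell^\infty}]]:$ the image of $f$ in $\Omega/\mathrm{Jac}(\Omega)[[\Gamma_{k\ell^\infty}]]$ is a nonzerodivisor$\}$. Then the ring homomorphism $\Omega[T]\to\Omega[[\Gamma_{k\ell^\infty}]]$, $T\mapsto\gamma^{-1}$, maps $P$ into $S$.
   Context: Adic ring $\Omega$: $\mathrm{Jac}(\Omega)^n$ has finite index for all $n\ge1$ and $\Omega=\varprojlim\Omega/\mathrm{Jac}(\Omega)^n$. With $q=|\mathbb{F}|$, $\Gamma_{k\ell^\infty}=\mathrm{Gal}(\bigcup_n\mathbb{F}_{q^{k\ell^n}}/\mathbb{F})\cong\mathbb{Z}/k\times\mathbb{Z}_\ell$; $\mathrm{Frob}_{\mathbb{F}}$ is the automorphism $x\mapsto x^{1/q}$. $\Omega[[\Gamma]]=\varprojlim_{J,U}\Omega/J[\Gamma/U]$. *)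

(* Defs.v *)
From HB Require Import structures.
From mathcomp Require Import all_boot all_order all_algebra.
Set Implicit Arguments. Unset Strict Implicit. Unset Printing Implicit Defensive.
Import GRing.Theory.
Local Open Scope ring_scope.

Section Ring.
Variable Omega : comNzRingType.

Definition is_unit (x : Omega) : Prop := exists y : Omega, y * x = 1.

(* Jacobson radical of a commutative ring: x \in Jac iff 1 - x y is a unit
   for every y (equivalently, x lies in every maximal ideal). *)
Definition jac (x : Omega) : Prop := forall y : Omega, is_unit (1 - x * y).

(* x \in Jac(Omega)^n : x is a finite sum of terms r * j_1 * ... * j_n with
   all j_i in Jac(Omega) (for n = 0 this is all of Omega). *)
Definition jacpow (n : nat) (x : Omega) : Prop :=
  exists s : seq (Omega * n.-tuple Omega),
    (forall p, p \in s -> forall i : 'I_n, jac (tnth p.2 i)) /\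
    x = \sum_(p <- s) p.1 * \prod_(i < n) tnth p.2 i.

Definition jacpow_finite_index (n : nat) : Prop :=
  exists s : seq Omega, forall x : Omega, exists2 y, y \in s & jacpow n (x - y).

Definition jac_separated : Prop :=
  forall x : Omega, (forall n, jacpow n x) -> x = 0.

(* Omega -> lim_n Omega/Jac^n is surjective: a compatible system of classes
   (given by lifts u n of the class in Omega/Jac^n) comes from some x. *)
Definition jac_complete : Prop :=
  forall u : nat -> Omega, (forall n, jacpow n (u n.+1 - u n)) ->
    exists x : Omega, forall n, jacpow n (x - u n).

Definition adic : Prop :=
  (forall n, (1 <= n)%N -> jacpow_finite_index n) /\ jac_separated /\ jac_complete.

(* Z_l-algebra structure on an adic ring: l is topologically nilpotent,
   i.e. l \in Jac(Omega). *)
Definition Zl_algebra (l : nat) : Prop := jac (l%:R).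

End Ring.

(* Completed group rings of Gamma = Z/k x Z_l.                              *)
(* Open subgroups U_n = 0 x l^n Z_l and open ideals Jac^m are cofinal, so    *)
(*   Omega[[Gamma]] = lim_{m,n} (Omega/Jac^m)[Z/k x Z/l^n].                 *)
(* An element of (Omega/J)[Z/k x Z/l^n] is represented by a function        *)
(* 'I_k -> 'I_(l^n) -> Omega (coefficient of the group element (a,b)),      *)
(* taken modulo J.                                                          *)
Section GroupRing.
Variables (Omega : comNzRingType) (l k : nat).

Definition OGfam := forall m n : nat, 'I_k -> 'I_(l ^ n) -> Omega.

Definition proj_level (n n' : nat) (g : 'I_k -> 'I_(l ^ n) -> Omega)
    (a : 'I_k) (b' : 'I_(l ^ n')) : Omega :=
  \sum_(b : 'I_(l ^ n) | (b %% l ^ n' == b')%N) g a b.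

Definition in_OG (F : OGfam) : Prop :=
  forall m m' n n' : nat, (m' <= m)%N -> (n' <= n)%N ->
    forall (a : 'I_k) (b' : 'I_(l ^ n')),
      jacpow m' (F m' n' a b' - @proj_level n n' (F m n) a b').

(* (Omega/Jac)[[Gamma]] = lim_n (Omega/Jac)[Z/k x Z/l^n]  (Omega/Jac finite) *)
Definition redfam := forall n : nat, 'I_k -> 'I_(l ^ n) -> Omega.

Definition in_redOG (g : redfam) : Prop :=
  forall n n' : nat, (n' <= n)%N -> forall (a : 'I_k) (b' : 'I_(l ^ n')),
    jac (g n' a b' - @proj_level n n' (g n) a b').

(* reduction map Omega[[Gamma]] -> (Omega/Jac)[[Gamma]] (Jac^1 = Jac) *)
Definition reduce (F : OGfam) : redfam := fun n => F 1%N n.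

Definition redmul (g h : redfam) : redfam := fun n c1 c2 =>
  \sum_(a1 : 'I_k) \sum_(b1 : 'I_k | ((a1 + b1) %% k == c1)%N)
  \sum_(a2 : 'I_(l ^ n)) \sum_(b2 : 'I_(l ^ n) | ((a2 + b2) %% l ^ n == c2)%N)
     g n a1 a2 * h n b1 b2.

Definition red_is0 (h : redfam) : Prop := forall n a b, jac (h n a b).

Definition red_nzd (g : redfam) : Prop :=
  forall h : redfam, in_redOG h -> red_is0 (redmul g h) -> red_is0 h.

Definition inS (F : OGfam) : Prop := in_OG F /\ red_nzd (reduce F).

Definition inP (f : {poly Omega}) : Prop := is_unit f`_0.

(* Under Gal(\bigcup_n F_{q^{k l^n}} / F) ~= Z/k x Z_l (arithmetic Frobenius
   x |-> x^q  |->  (1,1)), the geometric Frobenius gamma is (-1,-1), so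
   gamma^{-1} = (1,1) and gamma^{-i} has image (i mod k, i mod l^n) in
   Z/k x Z/l^n.  The ring map Omega[T] -> Omega[[Gamma]], T |-> gamma^{-1},
   sends f = \sum_i f_i T^i to the family below (independent of m). *)
Definition evalT (f : {poly Omega}) : OGfam := fun m n a b =>
  \sum_(i < size f | ((i %% k == a) && (i %% l ^ n == b))%N) f`_i.

End GroupRing.
Arguments proj_level : clear implicits.

(* Main.v *)
Require Import Defs.
From HB Require Import structures.
From mathcomp Require Import all_boot all_order all_algebra.
From mathcomp Require Import ring_quotient generic_quotient.
From mathcomp Require Import ring.
From Stdlib Require Import ClassicalDescription.
Set Implicit Arguments. Unset Strict Implicit. Unset Printing Implicit Defensive.
Import GRing.Theory.
Local Open Scope ring_scope.

Section Nil.
Variable R : comNzRingType.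
Implicit Types G Q : {poly R}.

Lemma nil_step G Q L i :
  (forall j, (j < L)%N -> (G * Q)`_j = 0) -> (forall j, (j < i)%N -> Q`_j = 0) ->
  (i + size G <= L)%N ->
  forall j, (j < size G)%N -> G`_j * Q`_i ^+ j.+1 = 0.
Proof.
move=> hGQ hQ hL; elim/ltn_ind => j IH hj.
have e0 : (G * Q)`_(i + j) = 0 by apply: hGQ; rewrite (leq_trans _ hL) // ltn_add2l.
have e1 : (G * Q)`_(i + j) = \sum_(t < j.+1) G`_(j - t) * Q`_(t + i).
  rewrite coefMr -(big_mkord xpredT (fun s => G`_(i + j - s) * Q`_s)).
  have hi : (i <= (i + j).+1)%N by rewrite ltnW // ltnS leq_addr.
  rewrite (big_cat_nat (leq0n i) hi) /=.
  rewrite big1_seq ?add0r; last first.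
    by move=> s /andP [_]; rewrite mem_index_iota => /andP [_ /hQ ->]; rewrite mulr0.
  rewrite -{1}(add0n i) big_addn -addnS addKn big_mkord.
  by apply: eq_bigr => t _; rewrite (addnC t i) subnDl.
move: e0; rewrite e1 big_ord_recl /= subn0 add0n => e0.
have : (G`_j * Q`_i + \sum_(t < j) G`_(j - bump 0 t) * Q`_(bump 0 t + i)) * Q`_i ^+ j = 0.
  by rewrite e0 mul0r.
rewrite mulrDl big_distrl /= big1 ?addr0; first by rewrite -mulrA -exprS.
move=> t _; rewrite /bump /= add1n.
have ht : (j - t.+1 < j)%N by rewrite ltn_subrL /=; case: j {IH hj e0 e1} t => [[]|].
have := IH _ ht (ltn_trans ht hj).
have -> : Q`_i ^+ j = Q`_i ^+ (j - t.+1).+1 * Q`_i ^+ (j - (j - t.+1).+1).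
  by rewrite -exprD subnKC.
move=> H.
have -> : G`_(j - t.+1) * Q`_(t.+1 + i) * (Q`_i ^+ (j - t.+1).+1 * Q`_i ^+ (j - (j - t.+1).+1))
  = (G`_(j - t.+1) * Q`_i ^+ (j - t.+1).+1) * (Q`_(t.+1 + i) * Q`_i ^+ (j - (j - t.+1).+1)) by ring.
by rewrite H mul0r.
Qed.

Lemma nil_all G Q L (hred : forall (x : R) n, x ^+ n = 0 -> x = 0)
  (hu : exists y, y * G.[-1] = 1) :
  (forall j, (j < L)%N -> (G * Q)`_j = 0) ->
  forall i, (i + size G <= L)%N -> Q`_i = 0.
Proof.
move=> hGQ; elim/ltn_ind => i IH hi.
have hQ : forall j, (j < i)%N -> Q`_j = 0.
  by move=> j hj; apply: IH => //; rewrite (leq_trans _ hi) // leq_add2r ltnW.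
have hs := nil_step hGQ hQ hi.
apply: (hred _ (size G)).
have [y hy] := hu.
rewrite -[LHS]mul1r -hy -mulrA horner_coef mulr_suml big1 ?mulr0 // => j _.
have -> : Q`_i ^+ size G = Q`_i ^+ j.+1 * Q`_i ^+ (size G - j.+1) by rewrite -exprD subnKC.
rewrite [X in X = 0](_ : _ = (G`_j * Q`_i ^+ j.+1) * ((-1) ^+ j * Q`_i ^+ (size G - j.+1))); last by ring.
by rewrite hs // mul0r.
Qed.

Lemma k1_lemma (F P W : {poly R}) (L L' : nat)
  (hred : forall (x : R) n, x ^+ n = 0 -> x = 0)
  (hF : exists y, y * F`_0 = 1) :
  F * P = W * ('X - 1) ^+ L -> (L' + size F <= L)%N ->
  exists W', P = W' * ('X - 1) ^+ L'.
Proof.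
move=> h hL.
pose G := F \Po ('X + 1%:P); pose Q := P \Po ('X + 1%:P).
have hsG : (size G <= size F)%N.
  rewrite /G; have [->|nz] := eqVneq F 0; first by rewrite comp_poly0 size_poly0.
  rewrite (leq_trans (size_comp_poly_leq _ _)) // size_XaddC muln1 prednK //.
  by rewrite size_poly_gt0.
have hG1 : G.[-1] = F`_0.
  by rewrite /G horner_comp hornerD hornerX hornerC addNr horner_coef0.
have hGQ : G * Q = (W \Po ('X + 1%:P)) * 'X^L.
  rewrite /G /Q -comp_polyM h comp_polyM rmorphXn /= comp_polyB comp_polyX comp_polyC.
  by rewrite addrK.
have hQ : forall i, (i < L')%N -> Q`_i = 0.
  move=> i hi; apply: (@nil_all G Q L hred); first by rewrite hG1.
    by move=> j hj; rewrite hGQ coefMXn hj.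
  by apply: (leq_trans _ hL); apply: leq_add => //; apply: ltnW.
exists (drop_poly L' Q \Po ('X - 1%:P)).
have hT : take_poly L' Q = 0.
  by apply/polyP => i; rewrite coef_take_poly coef0; case: ifP => // /hQ.
have eQ : Q = drop_poly L' Q * 'X^L' by rewrite -{1}(poly_take_drop L' Q) hT add0r.
have eP : P = Q \Po ('X - 1%:P) by rewrite /Q comp_polyXaddC_K.
by rewrite {1}eP {1}eQ comp_polyM comp_Xn_poly polyC1.
Qed.
End Nil.

Section Norm.
Variable R : comNzRingType.
Variable k : nat.
Hypothesis hk : (0 < k)%N.

Definition vecn (p : {poly R}) (r : nat) : {poly R} := \poly_(j < size p) p`_(j * k + r).
Definition unvec (w : 'I_k -> {poly R}) : {poly R} := \sum_(r < k) 'X^r * (w r \Po 'X^k).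

Lemma modk_lt i : (i %% k < k)%N. Proof. exact: ltn_pmod. Qed.

Lemma coef_unvec w i : (unvec w)`_i = (w (Ordinal (modk_lt i)))`_(i %/ k).
Proof.
rewrite /unvec coef_sum (bigD1 (Ordinal (modk_lt i))) //= big1 ?addr0.
  rewrite coefXnM ltnNge leq_mod /= coef_comp_poly_Xn //.
  have e : (i - i %% k = i %/ k * k)%N by rewrite {1}(divn_eq i k) addnK.
  by rewrite e dvdn_mull // mulnK.
move=> r hr; rewrite coefXnM; case: ltnP => // hri.
rewrite coef_comp_poly_Xn //; case: ifP => // hd; exfalso.
move/eqP: hr; apply; apply/val_inj => /=.
have -> : i = ((i - r) %/ k * k + r)%N by rewrite divnK // subnK.
by rewrite modnMDl modn_small.
Qed.

Lemma unvecK p : unvec (fun r => vecn p r) = p.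
Proof.
apply/polyP => i; rewrite coef_unvec /vecn coef_poly /=.
case: ltnP => h; first by rewrite -divn_eq.
rewrite nth_default //; apply: (leq_trans h); exact: leq_div.
Qed.

Lemma unvec_inj w w' : unvec w = unvec w' -> forall r, w r = w' r.
Proof.
move=> e r; apply/polyP => j.
have hr : Ordinal (modk_lt (j * k + r)) = r.
  by apply/val_inj => /=; rewrite modnMDl modn_small.
have hq : ((j * k + r) %/ k = j)%N by rewrite divnMDl // divn_small // addn0.
by have := congr1 (fun p : {poly R} => p`_(j * k + r)) e; rewrite /= !coef_unvec hr hq.
Qed.

Lemma unvecMl (c : {poly R}) w : (c \Po 'X^k) * unvec w = unvec (fun r => c * w r).
Proof.
rewrite /unvec big_distrr; apply: eq_bigr => r _.
by rewrite comp_polyM mulrCA.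
Qed.

Lemma unvecMr (c : {poly R}) w : unvec w * (c \Po 'X^k) = unvec (fun r => w r * c).
Proof.
rewrite /unvec big_distrl; apply: eq_bigr => r _.
by rewrite comp_polyM mulrA.
Qed.

Lemma eq_unvec w w' : (forall r, w r = w' r) -> unvec w = unvec w'.
Proof. by move=> e; apply: eq_bigr => r _; rewrite e. Qed.

Definition Amx (f : {poly R}) : 'M[{poly R}]_k :=
  \matrix_(t, s) (if (s <= t)%N then vecn f (t - s) else 'X * vecn f (t + k - s)).

Lemma mul_unvec f w : f * unvec w = unvec (fun t => \sum_s Amx f t s * w s).
Proof.
rewrite -{1}(unvecK f) /unvec big_distrl /=.
under eq_bigr do rewrite big_distrr /=.
under [RHS]eq_bigr do rewrite rmorph_sum big_distrr /=.
rewrite exchange_big [RHS]exchange_big /=; apply: eq_bigr => s _.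
pose h (r : 'I_k) : 'I_k := Ordinal (modk_lt (r + s)).
have hinj : injective h.
  move=> r1 r2 /(congr1 val) /= /eqP; rewrite eqn_modDr !modn_small // => /eqP e.
  exact: val_inj.
rewrite [RHS](reindex_inj hinj) /=; apply: eq_bigr => r _; rewrite mxE /=.
case: (ltnP (r + s) k) => hrs.
  rewrite modn_small // leq_addl addnK comp_polyM exprD; ring.
have ht : ((r + s) %% k = r + s - k)%N.
  rewrite -{1}(subnK hrs) modnDr modn_small // ltn_subLR //.
  by rewrite -addSn leq_add // ltnW.
rewrite ht.
have -> : (s <= r + s - k)%N = false.
  by apply/negbTE; rewrite -ltnNge ltn_subLR // ltn_add2r.
rewrite subnK // addnK !comp_polyM comp_polyX.
have -> : 'X^(r + s - k) * ('X^k * (vecn f r \Po 'X^k) * (w s \Po 'X^k))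
  = ('X^(r + s - k) * 'X^k) * (vecn f r \Po 'X^k) * (w s \Po 'X^k) by ring.
rewrite -exprD subnK // exprD; ring.
Qed.

Lemma norm_exists (f : {poly R}) : exists F fs : {poly R}, fs * f = F \Po 'X^k /\ F`_0 = f`_0 ^+ k.
Proof.
pose A := Amx f; pose i0 : 'I_k := Ordinal hk.
exists (\det A : {poly R}); exists (unvec (fun t => \adj A t i0)); split.
  rewrite mulrC mul_unvec.
  rewrite (@eq_unvec _ (fun t => (\det A) *+ (t == i0))); last first.
    move=> t; have := mul_mx_adj A; move/matrixP/(_ t i0).
    by rewrite !mxE.
  rewrite /unvec (bigD1 i0) //=.
  rewrite mulr1n expr0 mul1r big1 ?addr0 // => r hr.
  by rewrite (negbTE hr) mulr0n comp_polyC polyC0 mulr0.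
rewrite -horner_coef0 -horner_evalE -det_map_mx det_trig.
  rewrite (eq_bigr (fun _ => f`_0)); first by rewrite prodr_const card_ord.
  move=> i _; rewrite /A !mxE /= leqnn subnn horner_evalE horner_coef0 /vecn coef_poly.
  by case: ifP => // /negbT; rewrite -leqNgt => hs; rewrite nth_default.
apply/is_trig_mxP => i j hij; rewrite /A !mxE /= leqNgt hij /=.
by rewrite horner_evalE hornerM hornerX mul0r.
Qed.
End Norm.

Section PolyMain.
Variable R : comNzRingType.
Variables l k : nat.
Hypothesis hl : l \in [pchar R].
Hypothesis hk : (0 < k)%N.
Hypothesis hred : forall (x : R) n, x ^+ n = 0 -> x = 0.

Lemma frobX N : ('X^k - 1 : {poly R}) ^+ (l ^ N)%N = 'X^(k * l ^ N) - 1.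
Proof.
have hl' : l \in [pchar {poly R}] by rewrite pchar_poly.
have hn : (GRing.pchar {poly R}).-nat (l ^ N)%N.
  by rewrite pnatX pnatE ?hl' //; case/andP: hl.
by rewrite exprDn_pchar // exprNn_pchar // expr1n exprM.
Qed.

Theorem poly_main (f : {poly R}) (hf : exists y, y * f`_0 = 1) (n : nat) :
  exists N, (n <= N)%N /\ forall H Q : {poly R},
    f * H = Q * ('X^(k * l ^ N) - 1) -> exists Q', H = Q' * ('X^(k * l ^ n) - 1).
Proof.
have [F [fs [hfs hF0]]] := norm_exists hk f.
have hl1 : (1 < l)%N by case/andP: hl => /prime_gt1.
exists (n + size F)%N; split; first exact: leq_addr.
move=> H Q e.
have e2 : (F \Po 'X^k) * H = (fs * Q) * ((('X - 1) ^+ (l ^ (n + size F))%N) \Po 'X^k).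
  rewrite -hfs -[LHS]mulrA e -[RHS]mulrA; congr (_ * (_ * _)).
  by rewrite rmorphXn /= comp_polyB comp_polyX comp_polyC polyC1 frobX.
rewrite -(unvecK hk H) -(unvecK hk (fs * Q)) unvecMl unvecMr in e2.
have e3 := unvec_inj hk e2.
have hF : exists y, y * F`_0 = 1.
  by case: hf => y hy; exists (y ^+ k); rewrite hF0 -exprMn hy expr1n.
have hL : (l ^ n + size F <= l ^ (n + size F))%N.
  rewrite expnD.
  have h1 : (size F < l ^ size F)%N by rewrite ltn_expl.
  have h2 : (0 < l ^ n)%N by rewrite expn_gt0 (ltnW hl1).
  apply: (leq_trans _ (leq_mul (leqnn (l ^ n)%N) h1)).
  by rewrite mulnS leq_add2l leq_pmull.
have e4 : forall r : 'I_k, exists W', vecn k H r = W' * ('X - 1) ^+ (l ^ n)%N.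
  move=> r; apply: (k1_lemma hred hF (e3 r)).
  by rewrite (leq_trans _ hL) // leq_add2l.
have [W hW] := fin_all_exists e4.
exists (unvec W); rewrite -(unvecK hk H) (eq_unvec hW) -unvecMr.
by rewrite rmorphXn /= comp_polyB comp_polyX comp_polyC polyC1 frobX.
Qed.
End PolyMain.

Section Collapse.
Variable R : comNzRingType.

Lemma collapse (M B B' c : nat) (hM : (0 < M)%N) (P : nat -> bool) (Q : nat -> nat -> bool)
  (G : nat -> nat -> R) :
  \sum_(x < M) \sum_(y < M | ((x + y) %% M == c)%N)
     \sum_(s < B | P s && (s %% M == x)%N) \sum_(t < B' | Q s t && (t %% M == y)%N) G s t
  = \sum_(s < B | P s) \sum_(t < B' | Q s t && ((s + t) %% M == c)%N) G s t.
Proof.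
pose p' (i : 'I_B') : 'I_M := Ordinal (ltn_pmod i hM).
have hp' : forall (i : 'I_B') (x : 'I_M), (p' i == x) = (i %% M == x)%N.
  by move=> i x; rewrite -val_eqE.
pose p (i : 'I_B) : 'I_M := Ordinal (ltn_pmod i hM).
have hp : forall (i : 'I_B) (x : 'I_M), (p i == x) = (i %% M == x)%N.
  by move=> i x; rewrite -val_eqE.
rewrite [RHS](partition_big p xpredT) //=.
apply: eq_bigr => x _.
under [RHS]eq_bigl do rewrite hp.
rewrite exchange_big /=.
apply: eq_bigr => s /andP [_ /eqP hsx].
rewrite (partition_big p' xpredT) //= big_mkcond /=.
apply: eq_bigr => y _; case: ifP => hxy.
  apply: eq_bigl => t; rewrite hp'; case: (Q s t) => //=.
  case e: (t %% M == y)%N; rewrite ?andbF //.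
  by move/eqP: e => e; rewrite -modnDm hsx e hxy.
rewrite big1 // => t /andP [/andP [_ hc] /eqP ht].
by move: hc; rewrite -modnDm hsx -[(t %% M)%N]/(val (p' t)) ht hxy.
Qed.
Lemma collapseB (M B B' c : nat) (hM : (0 < M)%N) (Q : nat -> nat -> bool)
  (G : nat -> nat -> R) :
  \sum_(x < M) \sum_(y < M | ((x + y) %% M == c)%N)
     \sum_(s < B | (s %% M == x)%N) \sum_(t < B' | (t %% M == y)%N && Q s t) G s t
  = \sum_(s < B) \sum_(t < B' | ((s + t) %% M == c)%N && Q s t) G s t.
Proof.
pose p' (i : 'I_B') : 'I_M := Ordinal (ltn_pmod i hM).
have hp' : forall (i : 'I_B') (x : 'I_M), (p' i == x) = (i %% M == x)%N.
  by move=> i x; rewrite -val_eqE.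
pose p (i : 'I_B) : 'I_M := Ordinal (ltn_pmod i hM).
have hp : forall (i : 'I_B) (x : 'I_M), (p i == x) = (i %% M == x)%N.
  by move=> i x; rewrite -val_eqE.
rewrite [RHS](partition_big p xpredT) //=.
apply: eq_bigr => x _.
under [RHS]eq_bigl do rewrite hp.
rewrite exchange_big /=.
apply: eq_bigr => s /= /eqP hsx.
rewrite (partition_big p' xpredT) //= big_mkcond /=.
apply: eq_bigr => y _; case: ifP => hxy.
  apply: eq_bigl => t; rewrite hp'; case: (Q s t) => //=; rewrite ?andbF ?andbT //.
  case e: (t %% M == y)%N; rewrite ?andbF //.
  by move/eqP: e => e; rewrite -modnDm hsx e hxy.
rewrite big1 // => t /andP [/andP [hc _] /eqP ht].
by move: hc; rewrite -modnDm hsx -[(t %% M)%N]/(val (p' t)) ht hxy.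
Qed.
End Collapse.

Section Dict.
Variable R : comNzRingType.
Variables l k : nat.
Hypothesis hk : (0 < k)%N.
Hypothesis hl : (0 < l)%N.

Lemma sum_bound (p : {poly R}) B (P : pred nat) : (size p <= B)%N ->
  \sum_(i < size p | P i) p`_i = \sum_(i < B | P i) p`_i.
Proof.
move=> hB; rewrite (big_ord_widen_cond _ _ _ hB) big_mkcond [RHS]big_mkcond.
apply: eq_bigr => i _; case: (P i) => //=; case: ltnP => //= h.
by rewrite nth_default.
Qed.

Lemma evalT_bound (p : {poly R}) B m N a b : (size p <= B)%N ->
  @evalT R l k p m N a b = \sum_(i < B | ((i %% k == a) && (i %% l ^ N == b))%N) p`_i.
Proof. by move=> hB; rewrite /evalT (@sum_bound p B (fun i => (i %% k == a) && (i %% l ^ N == b))%N). Qed.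

Lemma coefM_sum (p q : {poly R}) i :
  (p * q)`_i = \sum_(s < size p) \sum_(t < size q) p`_s * q`_t * (i == s + t)%N%:R.
Proof.
rewrite -{1}(coefK p) -{1}(coefK q) !poly_def big_distrlr /= coef_sum.
apply: eq_bigr => s _; rewrite coef_sum; apply: eq_bigr => t _.
by rewrite -scalerAl -scalerAr scalerA -exprD coefZ coefXn.
Qed.

Lemma sum_pick B (C : pred nat) (x : R) j : (j < B)%N ->
  \sum_(i < B | C i) x * (i == j :> nat)%:R = if C j then x else 0.
Proof.
move=> hj; rewrite big_mkcond (bigD1 (Ordinal hj)) //= eqxx mulr1 big1 ?addr0.
  by case: (C j).
move=> i hi; case: (C i) => //.
have -> : (i == j :> nat) = false.
  by apply/negbTE; apply: contra hi => /eqP e; apply/eqP/val_inj.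
by rewrite mulr0.
Qed.

Lemma sum_pick1 B (C : pred nat) j : (j < B)%N ->
  \sum_(i < B | C i) (i == j :> nat)%:R = if C j then 1 else 0 :> R.
Proof.
move=> hj; rewrite -(sum_pick C 1 hj); apply: eq_bigr => i _; by rewrite mul1r.
Qed.

Lemma evalT_mul (p q : {poly R}) m N c1 c2 :
  @evalT R l k (p * q) m N c1 c2 = @redmul R l k (@evalT R l k p m) (@evalT R l k q m) N c1 c2.
Proof.
have hlN : (0 < l ^ N)%N by rewrite expn_gt0 hl.
have hB : (size (p * q)%R <= size p + size q)%N.
  exact: leq_trans (size_mul_leq _ _) (leq_pred _).
rewrite (evalT_bound _ _ _ hB).
under eq_bigr do rewrite coefM_sum.
rewrite exchange_big /=.
have e1 : forall s : 'I_(size p), \sum_(j < size p + size q | ((j %% k == c1) && (j %% l ^ N == c2))%N)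
      \sum_(t < size q) p`_s * q`_t * (j == s + t :> nat)%N%:R
   = \sum_(t < size q | (((s + t) %% k == c1) && ((s + t) %% l ^ N == c2))%N) p`_s * q`_t.
  move=> s; rewrite exchange_big [RHS]big_mkcond; apply: eq_bigr => t _ /=.
  rewrite (@sum_pick _ (fun i => ((i %% k) == c1) && ((i %% l ^ N) == c2))%N) //.
  by rewrite -addSn; apply: leq_add => //; apply: ltnW.
rewrite (eq_bigr _ (fun s _ => e1 s)) /redmul.
under [RHS]eq_bigr => a1 _ do under eq_bigr => b1 _ do under eq_bigr => a2 _ do
  under eq_bigr => b2 _ do rewrite /evalT big_distrlr.
under [RHS]eq_bigr => a1 _ do under eq_bigr => b1 _ do
  rewrite (@collapse R (l ^ N) (size p) (size q) c2 hlN
     (fun s => (s %% k == a1)%N) (fun _ t => (t %% k == b1)%N) (fun s t => p`_s * q`_t)).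
rewrite (@collapseB R k (size p) (size q) c1 hk (fun s t => ((s + t) %% l ^ N == c2)%N)
     (fun s t => p`_s * q`_t)).
by [].
Qed.

Lemma evalT_proj (p : {poly R}) m m' n n' (a : 'I_k) (b' : 'I_(l ^ n')) : (n' <= n)%N ->
  proj_level R l k n n' (@evalT R l k p m n) a b' = @evalT R l k p m' n' a b'.
Proof.
move=> hn; have hlN : (0 < l ^ n)%N by rewrite expn_gt0 hl.
have hdv : (l ^ n' %| l ^ n)%N by rewrite dvdn_exp2l.
pose pi (i : 'I_(size p)) : 'I_(l ^ n) := Ordinal (ltn_pmod i hlN).
rewrite /proj_level /evalT [RHS](partition_big pi xpredT) //= big_mkcond /=.
apply: eq_bigr => b _; case: ifP => hb.
  apply: eq_bigl => i; rewrite -val_eqE /=.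
  case: (i %% k == a)%N => //=.
  case e: (i %% l ^ n == b)%N; rewrite ?andbF ?andbT //.
  by move/eqP: e => e; rewrite -(modn_dvdm i hdv) e.
rewrite big1 // => i /andP [/andP [_ hc] /eqP hi].
by move: hc; rewrite -(modn_dvdm i hdv) -[(i %% l ^ n)%N]/(val (pi i)) hi hb.
Qed.

Lemma evalT_sub (p q : {poly R}) m N a b :
  @evalT R l k (p - q) m N a b = @evalT R l k p m N a b - @evalT R l k q m N a b.
Proof.
pose B := maxn (size p) (size q).
have h1 : (size p <= B)%N by rewrite leq_maxl.
have h2 : (size q <= B)%N by rewrite leq_maxr.
have h3 : (size (p - q)%R <= B)%N by rewrite (leq_trans (size_polyD _ _)) // size_polyN.
rewrite !(evalT_bound _ _ _ h1, evalT_bound _ _ _ h2, evalT_bound _ _ _ h3) -sumrB.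
by apply: eq_bigr => i _; rewrite coefB.
Qed.

Lemma evalT_XK m N a b : @evalT R l k ('X^(k * l ^ N) - 1) m N a b = 0.
Proof.
have hB : (size ('X^(k * l ^ N) - 1 : {poly R})%R <= (k * l ^ N).+1)%N.
  by rewrite (leq_trans (size_polyD _ _)) // size_polyN size_polyXn size_poly1 geq_max leqnn.
rewrite (evalT_bound _ _ _ hB).
under eq_bigr do rewrite coefB coefXn coef1.
rewrite sumrB.
rewrite (@sum_pick1 _ (fun i => ((i %% k) == a) && ((i %% l ^ N) == b))%N (k * l ^ N)%N) //.
rewrite (@sum_pick1 _ (fun i => ((i %% k) == a) && ((i %% l ^ N) == b))%N 0%N) //.
by rewrite /= modnMr modnMl !mod0n subrr.
Qed.

Hypothesis hkl : coprime k l.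

Lemma crt_uniq N i j : (i < k * l ^ N)%N -> (j < k * l ^ N)%N ->
  (i %% k = j %% k)%N -> (i %% l ^ N = j %% l ^ N)%N -> i = j.
Proof.
move=> hi hj e1 e2.
have hc : coprime k (l ^ N) by rewrite coprimeXr.
have : (i == j %[mod k * l ^ N])%N by rewrite chinese_remainder // e1 e2 !eqxx.
by rewrite !modn_small // => /eqP.
Qed.

Lemma crt_ex N (a b : nat) : (a < k)%N -> (b < l ^ N)%N ->
  exists i, [/\ (i < k * l ^ N)%N, (i %% k = a)%N & (i %% l ^ N = b)%N].
Proof.
move=> ha hb.
have hc : coprime k (l ^ N) by rewrite coprimeXr.
have hK : (0 < k * l ^ N)%N by rewrite muln_gt0 hk expn_gt0 hl.
exists (chinese k (l ^ N) a b %% (k * l ^ N))%N; split.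
- exact: ltn_pmod.
- by rewrite (modn_dvdm _ (dvdn_mulr _ (dvdnn k))) (chinese_modl hc) modn_small.
- by rewrite (modn_dvdm _ (dvdn_mull k (dvdnn (l ^ N)))) (chinese_modr hc) modn_small.
Qed.

Lemma sum_crt N (F : nat -> R) i : (i < k * l ^ N)%N ->
  \sum_(j < k * l ^ N | ((j %% k == i %% k) && (j %% l ^ N == i %% l ^ N))%N) F j = F i.
Proof.
move=> hi; rewrite (bigD1 (Ordinal hi)) /= ?eqxx // big1 ?addr0 // => j /andP [/andP [/eqP e1 /eqP e2] hj].
exfalso; move/eqP: hj; apply; apply/val_inj => /=.
exact: crt_uniq (ltn_ord j) hi e1 e2.
Qed.

Lemma evalT_zero (r : {poly R}) m N : (size r <= k * l ^ N)%N ->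
  (forall a b, @evalT R l k r m N a b = 0) -> r = 0.
Proof.
move=> hs h; apply/polyP => i; rewrite coef0.
case: (ltnP i (k * l ^ N)) => hi; last by rewrite nth_default // (leq_trans hs).
have hlN : (0 < l ^ N)%N by rewrite expn_gt0 hl.
have := h (Ordinal (ltn_pmod i hk)) (Ordinal (ltn_pmod i hlN)).
by rewrite (evalT_bound _ _ _ hs) /= sum_crt.
Qed.

Lemma evalT_phi N (h : 'I_k -> 'I_(l ^ N) -> R) m :
  exists H : {poly R}, forall a b, @evalT R l k H m N a b = h a b.
Proof.
have hlN : (0 < l ^ N)%N by rewrite expn_gt0 hl.
exists (\poly_(i < k * l ^ N) h (Ordinal (ltn_pmod i hk)) (Ordinal (ltn_pmod i hlN))).
move=> a b; rewrite (evalT_bound _ _ _ (size_poly _ _)).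
have [i [hi ea eb]] := crt_ex (ltn_ord a) (ltn_ord b).
have -> : a = Ordinal (ltn_pmod i hk) by apply/val_inj; rewrite /= ea.
have -> : b = Ordinal (ltn_pmod i hlN) by apply/val_inj; rewrite /= eb.
rewrite /= sum_crt // coef_poly hi.
by congr (h _ _); apply: val_inj.
Qed.
End Dict.


Section Q.
Variable Omega : comNzRingType.
Definition jacb (x : Omega) : bool := if excluded_middle_informative (jac x) then true else false.
Lemma jacbP x : reflect (jac x) (jacb x).
Proof. rewrite /jacb; case: excluded_middle_informative => h; constructor => //. Qed.

Lemma unitM (a b : Omega) : is_unit a -> is_unit b -> is_unit (a * b).
Proof. by move=> [u hu] [v hv]; exists (v * u); rewrite -mulrA (mulrA u) hu mul1r hv. Qed.

Lemma jac_closed : idealr_closed (jacb : {pred Omega}).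
Proof.
split.
- apply/jacbP => y; exists 1; by rewrite mul0r subr0 mulr1.
- apply/jacbP => /(_ 1) [y]; by rewrite mulr1 subrr mulr0 => /esym/eqP; rewrite oner_eq0.
- move=> a x y /jacbP hx /jacbP hy; apply/jacbP => z.
  have [w hw] := hy z.
  have -> : 1 - (a * x + y) * z = (1 - y * z) * (1 - x * (a * z * w)).
    have -> : (1 - y * z) * (1 - x * (a * z * w)) = 1 - y * z - x * a * z * (w * (1 - y * z)) by ring.
    by rewrite hw mulr1; ring.
  exact: unitM (hy z) (hx _).
Qed.

HB.instance Definition _ := isIdealr.Build Omega (jacb : {pred Omega}) jac_closed.

Definition QR := {ideal_quot (jacb : {pred Omega})}.
Definition piR : {rmorphism Omega -> QR} := (\pi_QR)%qT.

Lemma piR0 x : (piR x == 0) = jacb x.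
Proof. by rewrite /piR /= -pi_zeror piE Quotient.equivE subr0. Qed.

Lemma piR0P x : reflect (jac x) (piR x == 0).
Proof. rewrite piR0; exact: jacbP. Qed.

Lemma jac_pow (x : Omega) n : jac (x ^+ n) -> jac x.
Proof.
move=> h y; have [u hu] := h (y ^+ n).
exists (u * \sum_(i < n) (x * y) ^+ i).
rewrite -mulrA -(mulrC (1 - x * y)) .
have : 1 - (x * y) ^+ n = (1 - x * y) * \sum_(i < n) (x * y) ^+ i.
  by rewrite -opprB subrX1 -mulNr opprB.
by rewrite exprMn => <-.
Qed.

Lemma QR_red (x : QR) n : x ^+ n = 0 -> x = 0.
Proof.
rewrite -[x]reprK; set y := repr x; move=> h.
have : piR (y ^+ n) == 0 by rewrite rmorphXn /= h.
by move/piR0P/jac_pow/piR0P/eqP.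
Qed.
End Q.

Section Map.
Variables (A B : comNzRingType) (phi : {rmorphism A -> B}) (l k : nat).

Lemma evalT_map (f : {poly A}) m N a b :
  @evalT B l k (map_poly phi f) m N a b = phi (@evalT A l k f m N a b).
Proof.
have hs : (size (map_poly phi f) <= size f)%N.
  by rewrite map_polyE (leq_trans (size_Poly _)) // size_map.
rewrite (evalT_bound _ _ _ hs) /evalT rmorph_sum; apply: eq_bigr => i _.
by rewrite coef_map.
Qed.

Lemma redmul_ext (g g' h h' : redfam B l k) N c1 c2 :
  (forall a b, g N a b = g' N a b) -> (forall a b, h N a b = h' N a b) ->
  @redmul B l k g h N c1 c2 = @redmul B l k g' h' N c1 c2.
Proof.
move=> eg eh; rewrite /redmul; do 4 (apply: eq_bigr => ? _).
by rewrite eg eh.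
Qed.

Lemma redmul_map (g h : redfam A l k) N c1 c2 :
  phi (@redmul A l k g h N c1 c2) =
  @redmul B l k (fun n a b => phi (g n a b)) (fun n a b => phi (h n a b)) N c1 c2.
Proof.
rewrite /redmul rmorph_sum; apply: eq_bigr => ? _; rewrite rmorph_sum.
apply: eq_bigr => ? _; rewrite rmorph_sum; apply: eq_bigr => ? _; rewrite rmorph_sum.
by apply: eq_bigr => ? _; rewrite rmorphM.
Qed.

Lemma redmul0r (g h : redfam B l k) N c1 c2 :
  (forall a b, h N a b = 0) -> @redmul B l k g h N c1 c2 = 0.
Proof.
move=> eh; rewrite /redmul; apply: big1 => ? _; apply: big1 => ? _.
by apply: big1 => ? _; apply: big1 => ? _; rewrite eh mulr0.
Qed.
End Map.

Unset Implicit Arguments.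

Theorem lemma8p5 (Omega : comNzRingType) (l k : nat)
  (hl : prime l) (hk : (0 < k)%N) (hkl : coprime k l)
  (hadic : adic Omega) (hZl : Zl_algebra Omega l)
  (f : {poly Omega}) (hf : inP f) :
  @inS Omega l k (@evalT Omega l k f).
Proof.
have hl0 : (0 < l)%N by rewrite prime_gt0.
split.
  move=> m m' n n' hm hn a b'.
  rewrite (evalT_proj hl0 _ _ m' _ _ hn) subrr.
  by exists [::]; split => //; rewrite big_nil.
move=> h hh hz n a b.
pose pi := piR Omega.
have hlR : l \in [pchar (QR Omega)].
  apply/andP; split => //; rewrite -(rmorph_nat pi); exact/piR0P.
pose f' := map_poly pi f.
have hf' : exists y, y * f'`_0 = 1.
  by case: hf => y hy; exists (pi y); rewrite coef_map -rmorphM hy rmorph1.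
have [N [hnN hmain]] := poly_main hlR hk (@QR_red Omega) hf' n.
have [H hH] := evalT_phi hk hl0 hkl (fun a b => pi (h N a b)) 0.
pose d : {poly QR Omega} := 'X^(k * l ^ N) - 1.
have mond : d \is monic by rewrite monicXnsubC // muln_gt0 hk expn_gt0 hl0.
have hfH : forall c1 c2, @evalT _ l k (f' * H) 0 N c1 c2 = 0.
  move=> c1 c2; rewrite (evalT_mul hk hl0).
  rewrite (@redmul_ext _ l k _ (fun n a b => pi (@reduce Omega l k (@evalT Omega l k f) n a b))
     _ (fun n a b => pi (h n a b))).
  - by rewrite -redmul_map; apply/eqP/piR0P.
  - by move=> a' b'; rewrite evalT_map.
  - by move=> a' b'; rewrite hH.
have hdiv : f' * H = Pdiv.Ring.rdivp (f' * H) d * d.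
  have e := Pdiv.RingMonic.rdivp_eq mond (f' * H).
  set r := Pdiv.Ring.rmodp (f' * H) d in e.
  suff hr : r = 0 by rewrite {1}e hr addr0.
  apply: (evalT_zero hk hl0 hkl (m := 0%N) (N := N)).
    have := Pdiv.CommonRing.ltn_rmodp (f' * H) d.
    rewrite monic_neq0 // size_XnsubC ?muln_gt0 ?hk ?expn_gt0 ?hl0 //.
  move=> a' b'.
  have -> : r = f' * H - Pdiv.Ring.rdivp (f' * H) d * d.
    by rewrite {1}e addrAC subrr add0r.
  rewrite evalT_sub hfH (evalT_mul hk hl0) redmul0r ?subrr // => a2 b2.
  exact: evalT_XK.
have [Q' hQ'] := hmain _ _ hdiv.
have e1 : @evalT _ l k H 0 n a b = 0.
  rewrite hQ' (evalT_mul hk hl0) redmul0r // => a2 b2; exact: evalT_XK.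
move: e1; rewrite -(evalT_proj hl0 _ 0 _ _ _ hnN).
rewrite /proj_level (eq_bigr _ (fun b'' _ => hH a b'')) -rmorph_sum => hp.
have hc := eqP (introT (piR0P _) (hh N n hnN a b)).
apply: (elimT (piR0P _)); apply/eqP; rewrite -[h n a b](subrK (proj_level Omega l k N n (h N) a b)) rmorphD.
by rewrite hc hp addr0.
Qed.
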